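(* For the two-species competition model on $\mathbb{Z}$ (i.e. $d=1$), for every nondegenerate finite initial configuration ($R(0)$, $B(0)$ finite, disjoint, both nonempty), the event $\{R(t)\ne\emptyset\text{ and }B(t)\ne\emptyset\text{ for all }t\ge0\}$ of mutual survival has positive probability.
   Context: The two-species competition model on $\mathbb{Z}^d$ is the continuous-time Markov process $(R(t),B(t))_{t\ge0}$ whose state is a pair of disjoint subsets of $\mathbb{Z}^d$ ($R(t)$: Red sites, $B(t)$: Blue sites; other sites unoccupied). An unoccupied site becomes Red at rate equal to its number of Red nearest neighbours and Blue at rate equal to its number of Blue nearest neighbours; an occupied site flips to the opposite colour at rate equal to its number of nearest neighbours of the opposite colour; occupied sites never become unoccupied. *)

(* Defs.v *)
From HB Require Import structures.
From mathcomp Require Import all_boot all_order all_algebra.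
From mathcomp Require Import finmap.
Set Implicit Arguments.
Unset Strict Implicit.
Unset Printing Implicit Defensive.
Import Order.TTheory GRing.Theory Num.Theory.
Local Open Scope fset_scope.
Local Open Scope ring_scope.

(* A configuration: (Red sites, Blue sites), finite subsets of Z. *)
Definition config := ({fset int} * {fset int})%type.

(* colours: true = Red, false = Blue *)
Definition col_set (s : config) (c : bool) : {fset int} :=
  if c then s.1 else s.2.

Definition nb (A : {fset int}) (x : int) : nat :=
  ((x - 1) \in A) + ((x + 1) \in A).

Definition rate (s : config) (x : int) (c : bool) : nat :=
  if x \in col_set s c then 0%N else nb (col_set s c) x.

Definition update (s : config) (x : int) (c : bool) : config :=
  if c then (x |` s.1, s.2 `\ x) else (s.1 `\ x, x |` s.2).

(* every site with positive rate is a neighbour of an occupied site *)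
Definition cand (s : config) : seq int :=
  undup [seq (x + d)%R | x <- enum_fset (s.1 `|` s.2), d <- [:: -1; 1]].

Definition totrate (s : config) : nat :=
  (\sum_(x <- cand s) \sum_(c <- [:: true; false]) rate s x c)%N.

Definition nondeg (s : config) : bool := (s.1 != fset0) && (s.2 != fset0).

(* surv n s = probability that the embedded jump chain started at s has both
   colours present at each of its first n+1 states (steps 0..n). *)
Fixpoint surv (n : nat) (s : config) : rat :=
  match n with
  | 0%N => if nondeg s then 1 else 0
  | n'.+1 =>
      if nondeg s then
        \sum_(x <- cand s) \sum_(c <- [:: true; false])
          ((rate s x c)%:R / (totrate s)%:R) * surv n' (update s x c)
      else 0
  end.

(* Main.v *)
Require Import Defs.
From HB Require Import structures.
From mathcomp Require Import all_boot all_order all_algebra.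
From mathcomp Require Import finmap zify ring lra.
Import Order.TTheory GRing.Theory Num.Theory.
Set Implicit Arguments.
Unset Strict Implicit.
Local Open Scope fset_scope.
Local Open Scope ring_scope.

Definition occ (s : config) (x : int) : bool := (x \in s.1) || (x \in s.2).
Definition disj (s : config) := forall x, x \in s.1 -> x \in s.2 -> False.

Lemma col_occ s c x : x \in col_set s c -> occ s x.
Proof. by case: c => H; rewrite /occ H ?orbT. Qed.

Lemma disj_col s c x : disj s -> x \in col_set s c -> (x \in col_set s (~~ c)) = false.
Proof.
move=> D; case: c => /= H; apply/negP => H'; [exact: (D x H H')|exact: (D x H' H)].
Qed.

Lemma col_update s x c' cc y :
  (y \in col_set (update s x c') cc) =
  if c' == cc then (y == x) || (y \in col_set s cc) else (y != x) && (y \in col_set s cc).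
Proof. by case: c'; case: cc; rewrite /update /col_set /= ?in_fset1U ?in_fsetD1. Qed.

Lemma occ_update s x c' y : occ (update s x c') y = (y == x) || occ s y.
Proof.
rewrite /occ; case: c'; rewrite /update /= ?in_fset1U ?in_fsetD1;
  by case: (y == x); case: (y \in s.1); case: (y \in s.2).
Qed.

Lemma disj_update s x c' : disj s -> disj (update s x c').
Proof.
move=> D y; case: c'; rewrite /update /= ?in_fset1U ?in_fsetD1.
- by case: (y == x) => //= H H'; exact: (D y H H').
- by case: (y == x) => //= H H'; exact: (D y H H').
Qed.

Lemma nbd (A : {fset int}) (x d : int) : (d = 1 \/ d = -1) ->
  nb A x = addn (x - d \in A) (x + d \in A).
Proof.
rewrite /nb; case=> ->; first by [].
by rewrite opprK addnC.
Qed.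

Lemma sum2 (F : bool -> rat) c : \sum_(c' <- [:: true; false]) F c' = F c + F (~~ c).
Proof. by rewrite !big_cons big_nil addr0; case: c => //=; rewrite addrC. Qed.

Lemma cand_nb s y (e : int) : occ s y -> e \in [:: -1; 1] -> y + e \in cand s.
Proof.
move=> Hy He; rewrite /cand mem_undup.
by apply: (@allpairs_f _ _ _ (fun x d => x + d)) => //; rewrite /occ in_fsetU in Hy *.
Qed.

Lemma cand_of_rate s x c : (0 < rate s x c)%N -> x \in cand s.
Proof.
rewrite /rate; case: ifP => // _; rewrite /nb.
case Hm: (x - 1 \in col_set s c) => /=.
  have := @cand_nb _ _ 1 (col_occ Hm); rewrite subrK; apply; by rewrite ?inE ?eqxx ?orbT.
case Hp: (x + 1 \in col_set s c) => //= _.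
have := @cand_nb _ _ (-1) (col_occ Hp); rewrite addrK; apply; by rewrite ?inE ?eqxx ?orbT.
Qed.

Lemma uniq_cand s : uniq (cand s).
Proof. exact: undup_uniq. Qed.

Lemma sum_ge_term (r : seq int) (F : int -> rat) x :
  uniq r -> x \in r -> (forall y, 0 <= F y) -> F x <= \sum_(y <- r) F y.
Proof.
move=> U Hx H; rewrite (bigD1_seq x Hx U) /= lerDl.
by apply: sumr_ge0 => y _.
Qed.

Lemma sum_pred1 (r : seq int) p (v : rat) : uniq r ->
  \sum_(y <- r) (y == p)%:R * v = (p \in r)%:R * v.
Proof.
elim: r => [|y r IH] /=; first by rewrite big_nil mul0r.
case/andP=> Hy U; rewrite big_cons IH // in_cons.
have [E|ne] := eqVneq y p; last by rewrite /= mul0r add0r.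
by rewrite -E (negbTE Hy) /= mul0r addr0.
Qed.

Definition Ssum s (F : int -> bool -> rat) :=
  \sum_(x <- cand s) \sum_(c' <- [:: true; false]) (rate s x c')%:R * F x c'.

Lemma totrate_R s : (totrate s)%:R = Ssum s (fun _ _ => 1) :> rat.
Proof.
rewrite /totrate natr_sum; apply: eq_bigr => x _; rewrite natr_sum.
by apply: eq_bigr => c _; rewrite mulr1.
Qed.

Lemma surv_ge0 n s : 0 <= surv n s.
Proof.
elim: n s => [|n IH] s /=; first by case: (nondeg s).
case: (nondeg s) => //; apply: sumr_ge0 => x _; apply: sumr_ge0 => c _.
by apply: mulr_ge0 => //; apply: divr_ge0.
Qed.

Lemma surv0_le1 s : surv 0 s <= 1.
Proof. by rewrite /=; case: (nondeg s). Qed.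

Lemma rate_le_tot s x c : (rate s x c)%:R <= (totrate s)%:R :> rat.
Proof.
case: (posnP (rate s x c)) => [->|Hp]; first by rewrite ler0n.
rewrite totrate_R /Ssum.
set F := fun y => \sum_(c' <- [:: true; false]) (rate s y c')%:R * (1:rat).
apply: (@le_trans _ _ (F x)); last first.
  apply: sum_ge_term; [exact: uniq_cand|exact: cand_of_rate Hp|].
  by move=> y; apply: sumr_ge0 => c' _; rewrite mulr1.
by rewrite /F (sum2 _ c) !mulr1 lerDl.
Qed.

Lemma surv_step n s x c C : nondeg s -> (0 < rate s x c)%N ->
  C <= surv n (update s x c) ->
  (rate s x c)%:R / (totrate s)%:R * C <= surv n.+1 s.
Proof.
move=> nd Hp HC; rewrite /= nd.
set F := fun y => \sum_(c' <- [:: true; false])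
   ((rate s y c')%:R / (totrate s)%:R) * surv n (update s y c').
apply: (@le_trans _ _ (F x)); last first.
  apply: sum_ge_term; [exact: uniq_cand|exact: cand_of_rate Hp|].
  move=> y; apply: sumr_ge0 => c' _.
  by apply: mulr_ge0 => //; [apply: divr_ge0|apply: surv_ge0].
rewrite /F (sum2 _ c); apply: (@le_trans _ _ ((rate s x c)%:R / (totrate s)%:R * surv n (update s x c))).
  by apply: ler_wpM2l => //; apply: divr_ge0.
rewrite lerDl; apply: mulr_ge0; [apply: divr_ge0|apply: surv_ge0] => //.
Qed.

Lemma chain s x c C : nondeg s -> (0 < rate s x c)%N -> 0 < C ->
  (forall n, C <= surv n (update s x c)) ->
  exists C', 0 < C' /\ forall n, C' <= surv n s.
Proof.
move=> nd Hp HC H.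
have Hr : 0 < (rate s x c)%:R :> rat by rewrite ltr0n.
have HT : 0 < (totrate s)%:R :> rat by apply: (lt_le_trans Hr); apply: rate_le_tot.
exists ((rate s x c)%:R / (totrate s)%:R * C); split.
  by apply: mulr_gt0 => //; apply: divr_gt0.
case=> [|n]; last exact: surv_step.
rewrite /= nd; apply: mulr_ile1.
- by apply: divr_ge0; apply: ltW.
- exact: ltW.
- by rewrite ler_pdivrMr // mul1r rate_le_tot.
- exact: (le_trans (H 0%N) (surv0_le1 _)).
Qed.

Ltac dl hd := case: hd => ?; subst; lia.

Definition alpha : rat := 2^-1.

Definition Dir s (d : int) (c : bool) (L : int) (a : nat) :=
  (forall x, occ s x -> 0 <= d * (x - L)) /\
  (forall k : nat, (k < a)%N -> L + k%:Z * d \in col_set s c).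

Definition newA (d : int) (c : bool) (L : int) (a' : nat) (x : int) (c' : bool) : nat :=
  if (x == L - d) && (c' == c) then a'.+2
  else if (x == L + (a'.+1)%:Z * d) && (c' == c) then a'.+2
  else if (x == L + a'%:Z * d) && (c' == ~~ c) then a'
  else a'.+1.

Definition newL (d : int) (c : bool) (L : int) (x : int) (c' : bool) : int :=
  if (x == L - d) && (c' == c) then L - d else L.

Lemma negc_eq c : (~~ c == c) = false. Proof. by case: c. Qed.
Lemma c_negc c : (c == ~~ c) = false. Proof. by case: c. Qed.

Lemma dir_out s (d : int) c L a x cc : Dir s d c L a -> d * (x - L) < 0 ->
  (x \in col_set s cc) = false.
Proof.
move=> [H _] Hlt; apply/negP => Hx; have := H _ (col_occ Hx).
by rewrite leNgt Hlt.
Qed.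

Lemma dir_L s (d : int) c L a' : Dir s d c L a'.+1 -> L \in col_set s c.
Proof. by move=> [_ H]; have := H 0%N isT; rewrite mul0r addr0. Qed.


Lemma R1 s (d : int) c L a' : (d = 1 \/ d = -1) -> Dir s d c L a'.+1 -> rate s (L - d) c = 1%N.
Proof.
move=> hd H; rewrite /rate (dir_out (x := L - d) _ H); last by dl hd.
rewrite (nbd _ _ hd) (dir_out (x := L - d - d) _ H); last by dl hd.
by rewrite subrK (dir_L H).
Qed.

Lemma R2 s (d : int) c L a' : (d = 1 \/ d = -1) -> disj s -> Dir s d c L a'.+1 ->
  rate s (L - d) (~~ c) = 0%N.
Proof.
move=> hd D H; rewrite /rate (dir_out (x := L - d) _ H); last by dl hd.
rewrite (nbd _ _ hd) (dir_out (x := L - d - d) _ H); last by dl hd.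
by rewrite subrK (disj_col D (dir_L H)).
Qed.

Lemma R3 s (d : int) c L a' : (d = 1 \/ d = -1) -> disj s -> Dir s d c L a'.+1 ->
  rate s (L + a'%:Z * d) (~~ c) = (L + (a'.+1)%:Z * d \in col_set s (~~ c)) :> nat.
Proof.
move=> hd D H; rewrite /rate (disj_col D (H.2 a' (ltnSn _))) (nbd _ _ hd).
have -> : L + a'%:Z * d + d = L + (a'.+1)%:Z * d by dl hd.
case: a' H => [|a''] H.
  by rewrite (dir_out (x := L + 0%:Z * d - d) _ H) //; dl hd.
have -> : L + (a''.+1)%:Z * d - d = L + a''%:Z * d by dl hd.
by rewrite (disj_col D (H.2 a'' _)) // ltnS ltnW.
Qed.

Lemma R4 s (d : int) c L a' : (d = 1 \/ d = -1) -> disj s -> Dir s d c L a'.+1 ->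
  leq (L + (a'.+1)%:Z * d \in col_set s (~~ c)) (rate s (L + (a'.+1)%:Z * d) c).
Proof.
move=> hd D H; case Hq: (_ \in col_set s (~~ c)) => //.
rewrite /rate; have := disj_col D Hq; rewrite negbK => ->.
rewrite (nbd _ _ hd).
have -> : L + (a'.+1)%:Z * d - d = L + a'%:Z * d by dl hd.
by rewrite (H.2 a' (ltnSn _)).
Qed.

Lemma R5 s (d : int) c L a' k : (d = 1 \/ d = -1) -> disj s -> Dir s d c L a'.+1 ->
  (k < a')%N -> rate s (L + k%:Z * d) (~~ c) = 0%N.
Proof.
move=> hd D H Hk; rewrite /rate (disj_col D (H.2 k (ltnW Hk))) (nbd _ _ hd).
have -> : L + k%:Z * d + d = L + (k.+1)%:Z * d by dl hd.
rewrite (disj_col D (H.2 k.+1 _)) ?ltnS // addn0.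
case: k Hk => [|k] Hk.
  by rewrite (dir_out (x := L + 0%:Z * d - d) _ H) //; dl hd.
have -> : L + (k.+1)%:Z * d - d = L + k%:Z * d by dl hd.
by rewrite (disj_col D (H.2 k _)) // ltnS ltnW // ltnW.
Qed.

Definition dterm s d c L a' x c' : rat :=
  (rate s x c')%:R * (alpha ^+ newA d c L a' x c' - alpha ^+ a'.+1).

Definition qv s (d : int) c L a' : rat := (L + (a'.+1)%:Z * d \in col_set s (~~ c))%:R.

Definition gterm s (d : int) c L a' (x : int) : rat :=
  (x == L - d)%:R * (alpha ^+ a'.+2 - alpha ^+ a'.+1)
  + (x == L + (a'.+1)%:Z * d)%:R * (qv s d c L a' * (alpha ^+ a'.+2 - alpha ^+ a'.+1))
  + (x == L + a'%:Z * d)%:R * (qv s d c L a' * (alpha ^+ a' - alpha ^+ a'.+1)).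

Lemma alpha_ge0 n : 0 <= alpha ^+ n.
Proof. by apply: exprn_ge0; rewrite /alpha invr_ge0. Qed.

Lemma alpha_dec n : alpha ^+ n.+1 - alpha ^+ n <= 0.
Proof. have := alpha_ge0 n; rewrite exprS /alpha; lra. Qed.

Lemma drift_point s (d : int) c L a' x : (d = 1 \/ d = -1) -> disj s -> Dir s d c L a'.+1 ->
  dterm s d c L a' x c + dterm s d c L a' x (~~ c) <= gterm s d c L a' x.
Proof.
move=> hd D H; rewrite /dterm /gterm.
have nL1 : (L - d == L + (a'.+1)%:Z * d) = false by apply/eqP; dl hd.
have nL2 : (L - d == L + a'%:Z * d) = false by apply/eqP; dl hd.
have nL3 : (L + (a'.+1)%:Z * d == L + a'%:Z * d) = false by apply/eqP; dl hd.
have [E1|N1] := eqVneq x (L - d).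
  subst x; rewrite (R2 hd D H) mul0r addr0 (R1 hd H) nL1 nL2 /newA !eqxx /=.
  by rewrite !mul1r !mul0r !addr0.
have [E2|N2] := eqVneq x (L + (a'.+1)%:Z * d).
  subst x; rewrite /newA (negbTE N1) eqxx /= negc_eq andbF nL3 /= subrr mulr0 addr0.
  rewrite !mul0r mul1r add0r addr0 /qv ?eqxx /=.
  apply: ler_wnM2r; first exact: alpha_dec.
  by rewrite ler_nat (R4 hd D H).
have [E3|N3] := eqVneq x (L + a'%:Z * d).
  subst x; rewrite /newA (negbTE N1) (negbTE N2) /= c_negc andbF eqxx /= subrr mulr0 add0r.
  by rewrite eqxx (R3 hd D H) !mul0r mul1r !add0r /qv.
rewrite /newA (negbTE N1) (negbTE N2) (negbTE N3) /= !subrr !mulr0 !mul0r.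
by rewrite !addr0.
Qed.

Lemma drift s (d : int) c L a' : (d = 1 \/ d = -1) -> disj s -> Dir s d c L a'.+1 ->
  Ssum s (fun x c' => alpha ^+ newA d c L a' x c') <= (totrate s)%:R * alpha ^+ a'.+1.
Proof.
move=> hd D H; rewrite totrate_R -subr_le0.
have -> : Ssum s (fun x c' => alpha ^+ newA d c L a' x c') - Ssum s (fun _ _ => 1) * alpha ^+ a'.+1
   = \sum_(x <- cand s) (dterm s d c L a' x c + dterm s d c L a' x (~~ c)).
  rewrite /Ssum mulr_suml -sumrB; apply: eq_bigr => x _.
  rewrite mulr_suml -sumrB -(sum2 (fun c' => dterm s d c L a' x c')).
  by apply: eq_bigr => c' _; rewrite /dterm mulrBr mulr1.
apply: (@le_trans _ _ (\sum_(x <- cand s) gterm s d c L a' x)).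
  by apply: ler_sum => x _; apply: drift_point.
rewrite /gterm !big_split /= !sum_pred1 ?uniq_cand //.
have -> : (L - d \in cand s) by apply: (@cand_of_rate _ _ c); rewrite (R1 hd H).
have Hb := alpha_ge0 a'.
rewrite /qv; case Hq: (L + (a'.+1)%:Z * d \in col_set s (~~ c)).
  have -> : (L + (a'.+1)%:Z * d \in cand s).
    apply: (@cand_of_rate _ _ c); have := R4 hd D H; rewrite Hq; exact.
  case: (L + a'%:Z * d \in cand s); rewrite !exprS /alpha /= ?mul1r ?mul0r ?addr0 in Hb *; lra.
rewrite !mul0r !mulr0 !addr0 mul1r; exact: alpha_dec.
Qed.

Lemma neq_negc (c c' : bool) : (c' == c) = false -> c' = ~~ c.
Proof. by case: c; case: c'. Qed.

Lemma xpos s (d : int) c L a' x c' : (d = 1 \/ d = -1) -> disj s -> Dir s d c L a'.+1 ->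
  (0 < rate s x c')%N -> ((x == L - d) && (c' == c)) || (0 <= d * (x - L)).
Proof.
move=> hd D H Hr; case: (boolP (0 <= d * (x - L))) => [_|Hn]; first by rewrite orbT.
rewrite orbF; rewrite -ltNge in Hn.
have Ex : x = L - d.
  move: Hr; rewrite /rate; case: ifP => // _; rewrite (nbd _ _ hd).
  case Hm: (x - d \in col_set s c').
    by have := H.1 _ (col_occ Hm); move: Hn; dl hd.
  case Hp: (x + d \in col_set s c') => //= _.
  by have := H.1 _ (col_occ Hp); move: Hn; dl hd.
subst x; rewrite eqxx /=; case Ec: (c' == c) => //.
by move: Hr; rewrite (neq_negc Ec) (R2 hd D H).
Qed.

Lemma pres s (d : int) c L a' x c' : (d = 1 \/ d = -1) -> disj s -> Dir s d c L a'.+1 ->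
  (0 < rate s x c')%N ->
  Dir (update s x c') d c (newL d c L x c') (newA d c L a' x c').
Proof.
move=> hd D H Hr; split.
  move=> z; rewrite occ_update; case/orP => [/eqP -> | Hz].
    have := xpos hd D H Hr; rewrite /newL; case: ifP => [/andP [/eqP -> _] _ | _ /= Hx].
      by dl hd.
    exact: Hx.
  by rewrite /newL; case: ifP => _; have := H.1 _ Hz; dl hd.
move=> k; rewrite /newA /newL.
case HA: ((x == L - d) && (c' == c)).
  move/andP: HA => [/eqP Ex /eqP Ec]; subst x c' => Hk; rewrite col_update eqxx /=.
  case: k Hk => [|k] Hk; first by rewrite mul0r addr0 eqxx.
  have -> : L - d + (k.+1)%:Z * d = L + k%:Z * d by dl hd.
  by rewrite H.2 ?orbT.
case HB: ((x == L + (a'.+1)%:Z * d) && (c' == c)).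
  move/andP: HB => [/eqP Ex /eqP Ec]; subst x c' => Hk; rewrite col_update eqxx /=.
  rewrite ltnS leq_eqVlt in Hk; case/orP: Hk => [/eqP -> | Hk]; first by rewrite eqxx.
  by rewrite H.2 ?orbT.
case HC: ((x == L + a'%:Z * d) && (c' == ~~ c)).
  move/andP: HC => [/eqP Ex /eqP Ec]; subst x c' => Hk; rewrite col_update negc_eq /=.
  rewrite H.2 ?andbT; last by apply: ltnW.
  by apply/eqP; dl hd.
move=> Hk; rewrite col_update; case Ec: (c' == c); first by rewrite H.2 ?orbT.
rewrite H.2 // andbT; apply/eqP => Ey.
have Ec' := neq_negc Ec; subst c'.
rewrite eqxx andbT in HC.
have Hk' : (k < a')%N.
  rewrite ltnS leq_eqVlt in Hk; case/orP: Hk => [/eqP Ek|//].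
  by subst k; rewrite Ey eqxx in HC.
by move: Hr; rewrite -Ey (R5 hd D H Hk').
Qed.

Lemma Ssum_div s F : \sum_(x <- cand s) \sum_(c' <- [:: true; false])
   ((rate s x c')%:R / (totrate s)%:R) * F x c' = ((totrate s)%:R)^-1 * Ssum s F.
Proof.
rewrite /Ssum mulr_sumr; apply: eq_bigr => x _; rewrite mulr_sumr.
by apply: eq_bigr => c' _; rewrite mulrAC mulrC.
Qed.

Lemma nondeg_of s c x y : x \in col_set s c -> y \in col_set s (~~ c) -> nondeg s.
Proof.
by case: c => /= Hx Hy; rewrite /nondeg; apply/andP; split; apply/fset0Pn; eexists; eauto.
Qed.

Lemma main_bound n : forall s c L a M b, disj s -> Dir s 1 c L a -> Dir s (-1) (~~ c) M b ->
  1 - alpha ^+ a - alpha ^+ b <= surv n s.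
Proof.
elim: n => [|n IH] s c L a M b D H1 H2.
  case: a H1 => [|a'] H1.
    by have:= surv_ge0 0 s; have := alpha_ge0 b; rewrite expr0; lra.
  case: b H2 => [|b'] H2.
    by have:= surv_ge0 0 s; have := alpha_ge0 a'.+1; rewrite expr0; lra.
  rewrite /= (nondeg_of (dir_L H1) (dir_L H2)).
  by have := alpha_ge0 a'.+1; have := alpha_ge0 b'.+1; lra.
case: a H1 => [|a'] H1.
  by have:= surv_ge0 n.+1 s; have := alpha_ge0 b; rewrite expr0; lra.
case: b H2 => [|b'] H2.
  by have:= surv_ge0 n.+1 s; have := alpha_ge0 a'.+1; rewrite expr0; lra.
have nd := nondeg_of (dir_L H1) (dir_L H2); rewrite /= nd.
have hd1 : (1 : int) = 1 \/ (1 : int) = -1 by left.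
have hd2 : (-1 : int) = 1 \/ (-1 : int) = -1 by right.
have HT : 0 < (totrate s)%:R :> rat.
  have := rate_le_tot s (L - 1) c; rewrite (R1 hd1 H1) => Hle.
  exact: (lt_le_trans _ Hle).
apply: (@le_trans _ _ (\sum_(x <- cand s) \sum_(c' <- [:: true; false])
   ((rate s x c')%:R / (totrate s)%:R) *
   (1 - alpha ^+ newA 1 c L a' x c' - alpha ^+ newA (-1) (~~ c) M b' x c'))); last first.
  apply: ler_sum => x _; apply: ler_sum => c' _.
  case: (posnP (rate s x c')) => [->|Hp]; first by rewrite !mul0r.
  apply: ler_wpM2l; first by apply: divr_ge0.
  apply: (IH _ c (newL 1 c L x c') _ (newL (-1) (~~ c) M x c')).
  - exact: disj_update.
  - exact: pres.
  - exact: pres.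
rewrite Ssum_div.
have -> : Ssum s (fun x c' => 1 - alpha ^+ newA 1 c L a' x c' - alpha ^+ newA (-1) (~~ c) M b' x c')
  = Ssum s (fun _ _ => 1) - Ssum s (fun x c' => alpha ^+ newA 1 c L a' x c')
    - Ssum s (fun x c' => alpha ^+ newA (-1) (~~ c) M b' x c').
  rewrite /Ssum -!sumrB; apply: eq_bigr => x _; rewrite -!sumrB.
  by apply: eq_bigr => c' _; rewrite !mulrBr.
rewrite -totrate_R.
have d1 := drift hd1 D H1; have d2 := drift hd2 D H2.
rewrite -[X in X <= _](mulKf (lt0r_neq0 HT)); apply: ler_wpM2l.
  by rewrite invr_ge0 ltW.
rewrite !mulrBr mulr1; lra.
Qed.

Lemma seq_min (r : seq int) : r != [::] -> exists2 L, L \in r & forall x, x \in r -> L <= x.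
Proof.
elim: r => [//|y r IH] _.
case: r IH => [|z r] IH.
  by exists y; rewrite ?inE // => x; rewrite inE => /eqP ->.
have [L HL HLm] := IH isT.
case: (lerP y L) => Hy.
  exists y; first by rewrite inE eqxx.
  move=> x; rewrite in_cons => /orP [/eqP ->//|Hx]; exact: le_trans Hy (HLm _ Hx).
exists L; first by rewrite in_cons HL orbT.
move=> x; rewrite in_cons => /orP [/eqP ->|Hx]; [exact: ltW|exact: HLm].
Qed.

Lemma seq_ub (r : seq int) : exists U, forall x, x \in r -> x <= U.
Proof.
elim: r => [|y r [U HU]]; first by exists 0.
case: (lerP y U) => Hy.
  by exists U => x; rewrite in_cons => /orP [/eqP ->|/HU].
exists y => x; rewrite in_cons => /orP [/eqP ->//|/HU Hx]; exact: (le_trans Hx (ltW Hy)).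
Qed.

Lemma path_lemma c L k : forall s y, disj s -> L \in col_set s c ->
  (forall x, occ s x -> L <= x) -> y \in col_set s (~~ c) -> L < y ->
  (forall x, occ s x -> x <= y + k%:Z) ->
  exists C, 0 < C /\ forall n, C <= surv n s.
Proof.
have hd1 : (1 : int) = 1 \/ (1 : int) = -1 by left.
elim: k => [|k IH] s y D HL HLm Hy HLy Hub.
  have nd := nondeg_of HL Hy.
  have Hn : (y + 1 \in col_set s (~~ c)) = false.
    by apply/negP => /col_occ /Hub; lia.
  have Hr : (0 < rate s (y + 1) (~~ c))%N by rewrite /rate Hn /nb addrK Hy.
  apply: (chain nd Hr (C := 1 - alpha ^+ 1 - alpha ^+ 2)).
    by rewrite expr1 expr2 /alpha; lra.
  move=> n; apply: (main_bound n (c := c) (L := L) (M := y + 1)).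
  - exact: disj_update.
  - split.
      move=> z; rewrite occ_update => /orP [/eqP ->|/HLm]; lia.
    case=> [|//] _; rewrite col_update negc_eq /= mul0r addr0 HL andbT.
    by apply/eqP; lia.
  - split.
      move=> z; rewrite occ_update => /orP [/eqP ->|/Hub]; lia.
    case=> [|[|//]] _; rewrite col_update eqxx; first by rewrite mul0r addr0 eqxx.
    have -> : y + 1 + 1%:Z * -1 = y by lia.
    by rewrite Hy orbT.
have nd := nondeg_of HL Hy.
case Hn: (y + 1 \in col_set s (~~ c)).
  apply: (IH s (y + 1)) => //; first by lia.
  by move=> x /Hub; lia.
have Hr : (0 < rate s (y + 1) (~~ c))%N by rewrite /rate Hn /nb addrK Hy.
have [C [HC HCn]] : exists C, 0 < C /\ forall n, C <= surv n (update s (y + 1) (~~ c)).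
  apply: (IH _ (y + 1)).
  - exact: disj_update.
  - by rewrite col_update negc_eq /= HL andbT; apply/eqP; lia.
  - by move=> z; rewrite occ_update => /orP [/eqP ->|/HLm]; lia.
  - by rewrite col_update eqxx eqxx.
  - lia.
  - by move=> z; rewrite occ_update => /orP [/eqP ->|/Hub]; lia.
exact: (chain nd Hr HC HCn).
Qed.

Unset Implicit Arguments.
Set Strict Implicit.

Theorem mainTheorem2 (R0 B0 : {fset int}) :
  R0 != fset0 -> B0 != fset0 -> R0 `&` B0 = fset0 ->
  exists c : rat, 0 < c /\ forall n : nat, c <= surv n (R0, B0).
Proof.
move=> HR HB HI.
have D : disj (R0, B0).
  move=> x /= H1 H2; have : x \in R0 `&` B0 by rewrite in_fsetI H1 H2.
  by rewrite HI in_fset0.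
have Hne : enum_fset (R0 `|` B0) != [::].
  apply/negP => /eqP E; case/fset0Pn: HR => x Hx.
  have : x \in R0 `|` B0 by rewrite in_fsetU Hx.
  by rewrite -[x \in R0 `|` B0]/(x \in enum_fset (R0 `|` B0)) E.
have [L HL HLm] := seq_min Hne.
have [U HU] := seq_ub (enum_fset (R0 `|` B0)).
have occE : forall x, occ (R0, B0) x = (x \in enum_fset (R0 `|` B0)).
  by move=> x; rewrite -[x \in enum_fset _]/(x \in R0 `|` B0) in_fsetU.
set c := L \in R0.
have HLc : L \in col_set (R0, B0) c.
  rewrite /c; case E: (L \in R0) => //=.
  by move: HL; rewrite -occE /occ /= E.
have [y Hy] : exists y, y \in col_set (R0, B0) (~~ c).
  by case: c HLc => _ /=; apply/fset0Pn.
have HLy : L < y.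
  rewrite lt_neqAle HLm -?occE ?(col_occ Hy) // andbT.
  by apply/eqP => E; subst y; rewrite (disj_col D HLc) in Hy.
apply: (path_lemma (k := `|U - y|%N) D HLc _ Hy HLy).
  by move=> x; rewrite occE; apply: HLm.
move=> x; rewrite occE => /HU; lia.
Qed.
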